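(* Let $\mathbf b=b_0b_1b_2\cdots\in\{1,-1\}^{\mathbb N}$ be fixed and let $m\ge1$. Let $s_1,s_2\ge 0$ and $d_1,d_2\ge1$ be integers such that $s_2$ and $d_2$ are even. Let $r$ be such that $2^r> s_1+m d_1$, and suppose that for each $i\ge 0$ the following implication holds: if $\mathcal E_{i,1}(s_2,d_2,m)\neq \mathcal E_{i,-1}(s_2,d_2,m)$, then $b_i=b_{i+r}$. Then \[\Delta(s_1,d_1,m)+\Delta(s_2,d_2,m)=\Delta(s_1+2^r s_2,\; d_1+2^r d_2,\; m).\]
   Context: For integers $a$ and $N\ge1$, $(a \bmod N)$ denotes the unique integer in $\{0,\dots,N-1\}$ congruent to $a$ modulo $N$; we write $a\succ c \pmod N$ iff $(a\bmod N)>(c\bmod N)$. For $b\in\{-1,1\}$, $k\ge0$ and integers $0\le\ell\le n$, let $\varepsilon_{k,b}(\ell,n)=1$ if $n-\ell \succ (2+b)\cdot 2^k-(\ell+1) \pmod{2^{k+2}}$ and $\varepsilon_{k,b}(\ell,n)=0$ otherwise. (Equivalently, $\varepsilon_{k,b}(\ell,n)=D_{k,b}(\ell,n)-\lfloor (n-\ell)/2^{k+2}\rfloor$, where $D_{k,b}(\ell,n)$ is the number of integers $i\in(\ell,n]$ with $i\equiv (2+b)2^k \pmod{2^{k+2}}$.) For integers $s\ge0$, $d\ge1$, $m\ge1$ define the vector \[\mathcal E_{k,b}(s,d,m)=\big(\varepsilon_{k,b}(s,s+d),\varepsilon_{k,b}(s+d,s+2d),\dots,\varepsilon_{k,b}(s+(m-1)d,s+md)\big)\]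 and, for the fixed sequence $\mathbf b$, $\Delta(s,d,m)=\sum_{k=0}^{\infty}\mathcal E_{k,b_k}(s,d,m)$ (only finitely many summands are nonzero). *)

(* Defs.v *)
From mathcomp Require Import all_boot all_order all_algebra.
From mathcomp Require Import zify.
Set Implicit Arguments. Unset Strict Implicit. Unset Printing Implicit Defensive.
Import Order.TTheory GRing.Theory Num.Theory.

Definition succ_mod (a c : int) (N : nat) : bool :=
  ((c %% N%:Z)%Z < (a %% N%:Z)%Z)%R.

Definition eps (k : nat) (b : int) (l n : nat) : nat :=
  succ_mod (n%:Z - l%:Z)%R ((2%:Z + b) * (2 ^ k)%:Z - (l%:Z + 1))%R (2 ^ k.+2).

Definition Evec (k : nat) (b : int) (s d m : nat) : seq nat :=
  [seq eps k b (s + j * d) (s + j.+1 * d) | j <- iota 0 m].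

(* Component of Delta: sum_{k>=0} eps_{k,b_k}(l,n).  All terms with k >= n
   vanish when l <= n (since 2^k > n), see [eps_large] below, so the
   infinite sum equals the finite sum over k < n.+1. *)
Definition Dcomp (bs : nat -> int) (l n : nat) : nat :=
  \sum_(k < n.+1) eps k (bs k) l n.

Definition Delta (bs : nat -> int) (s d m : nat) : seq nat :=
  [seq Dcomp bs (s + j * d) (s + j.+1 * d) | j <- iota 0 m].

Definition vadd (u v : seq nat) : seq nat := [seq p.1 + p.2 | p <- zip u v].

Lemma eps_large k b l n : (b = 1 \/ b = -1)%R -> l <= n -> n < 2 ^ k -> eps k b l n = 0.
Proof.
move=> hb hln hk; rewrite /eps /succ_mod.
have e4 : 2 ^ k.+2 = 4 * 2 ^ k by rewrite !expnS mulnA.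
rewrite e4.
have -> : ((n%:Z - l%:Z) %% (4 * 2 ^ k)%:Z)%Z = (n%:Z - l%:Z)%R.
  by apply/modz_small; lia.
case: hb => ->.
- have -> : (((2%:Z + 1) * (2 ^ k)%:Z - (l%:Z + 1)) %% (4 * 2 ^ k)%:Z)%Z
     = ((2%:Z + 1) * (2 ^ k)%:Z - (l%:Z + 1))%R.
    by apply/modz_small; lia.
  by case: ltP => //; lia.
- have -> : (((2%:Z + -1) * (2 ^ k)%:Z - (l%:Z + 1)) %% (4 * 2 ^ k)%:Z)%Z
     = ((2%:Z + -1) * (2 ^ k)%:Z - (l%:Z + 1))%R.
    by apply/modz_small; lia.
  by case: ltP => //; lia.
Qed.

Lemma eps_tail k b l n : (b = 1 \/ b = -1)%R -> l <= n -> n < k -> eps k b l n = 0.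
Proof. move=> hb hl hk; apply: eps_large => //; apply: leq_trans (ltn_expl _ (isT : 1 < 2)); exact: ltnW. Qed.

(* Main.v *)
Require Import Defs.
From mathcomp Require Import all_boot all_order all_algebra zify ring lra.
Import Order.TTheory GRing.Theory Num.Theory.
Open Scope ring_scope.
Lemma modsplit (y z : int) (P M : nat) : (0 < P)%N -> (0 < M)%N -> (0 <= z < P%:Z) ->
  ((y * P%:Z + z) %% (M * P)%:Z)%Z = ((y %% M%:Z)%Z * P%:Z + z).
Proof.
move=> hP hM hz.
rewrite {1}(divz_eq y M%:Z).
have h1 : 0 <= (y %% M%:Z)%Z by apply: modz_ge0; lia.
have h2 : (y %% M%:Z)%Z < M%:Z by apply: ltz_pmod; lia.
move: h1 h2.
set q := (y %/ M%:Z)%Z; set r := (y %% M%:Z)%Z.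
move=> h1 h2.
have -> : (q * M%:Z + r) * P%:Z + z = q * (M * P)%:Z + (r * P%:Z + z).
  by rewrite PoszM; ring.
rewrite modzMDl modz_small //. 
nia.
Qed.

Lemma succ_mod_shift a c t u N : succ_mod (t * N%:Z + a) (u * N%:Z + c) N = succ_mod a c N.
Proof. by rewrite /succ_mod !modzMDl. Qed.

Lemma even_ex n : ~~ odd n -> exists a, n = (2 * a)%N.
Proof. move/negbTE=> h; exists n./2; have := odd_double_half n; rewrite h add0n -muln2 mulnC; by []. Qed.

Lemma eps_small k p b l1 n1 l2 n2 : ~~ odd l2 -> ~~ odd n2 ->
  eps k b (l1 + 2 ^ (k.+1 + p) * l2) (n1 + 2 ^ (k.+1 + p) * n2) = eps k b l1 n1.
Proof.
move=> /even_ex [a ->] /even_ex [a' ->].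
have e : forall x, (2 ^ (k.+1 + p) * (2 * x) = (2 ^ p * x) * 2 ^ k.+2)%N.
  by move=> x; rewrite expnD !expnS; ring.
rewrite /eps !e.
set X := (2 ^ k.+2)%N.
have -> : ((n1 + 2 ^ p * a' * X)%N%:Z - (l1 + 2 ^ p * a * X)%N%:Z)
   = ((2 ^ p * a')%N%:Z - (2 ^ p * a)%N%:Z) * X%:Z + (n1%:Z - l1%:Z).
  by rewrite !PoszD !PoszM; ring.
have -> : ((2%:Z + b) * (2 ^ k)%N%:Z - ((l1 + 2 ^ p * a * X)%N%:Z + 1))
   = (- (2 ^ p * a)%N%:Z) * X%:Z + ((2%:Z + b) * (2 ^ k)%N%:Z - (l1%:Z + 1)).
  by rewrite !PoszD !PoszM; ring.
by rewrite succ_mod_shift.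
Qed.

Lemma eps_big k r b l1 n1 l2 n2 : (l1 <= n1)%N -> (n1 < 2 ^ r)%N ->
  eps (k + r) b (l1 + 2 ^ r * l2) (n1 + 2 ^ r * n2) = eps k b l2 n2.
Proof.
move=> h1 h2.
rewrite /eps /succ_mod.
have eN : (2 ^ (k + r).+2 = 2 ^ k.+2 * 2 ^ r)%N by rewrite -expnD addSn.
rewrite eN.
set P := (2 ^ r)%N. set M := (2 ^ k.+2)%N.
have hP : (0 < P)%N by rewrite expn_gt0.
have hM : (0 < M)%N by rewrite expn_gt0.
have -> : ((n1 + P * n2)%N%:Z - (l1 + P * l2)%N%:Z)
   = (n2%:Z - l2%:Z) * P%:Z + (n1%:Z - l1%:Z).
  by rewrite !PoszD !PoszM; ring.
have -> : ((2%:Z + b) * (2 ^ (k + r))%N%:Z - ((l1 + P * l2)%N%:Z + 1))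
   = ((2%:Z + b) * (2 ^ k)%N%:Z - (l2%:Z + 1)) * P%:Z + (P%:Z - l1%:Z - 1).
  by rewrite expnD !PoszD !PoszM; ring.
rewrite !modsplit //; try lia.
set A := (_ %% _)%Z. set B := (_ %% _)%Z.
have hA : 0 <= A by apply: modz_ge0; lia.
have hB : 0 <= B by apply: modz_ge0; lia.
move: A B hA hB => A B hA hB.
have [h|h] := ltP A B.
- have H : A * P%:Z + (P%:Z - l1%:Z - 1) < B * P%:Z + (n1%:Z - l1%:Z) by nia.
  by rewrite H.
- have H : B * P%:Z + (n1%:Z - l1%:Z) <= A * P%:Z + (P%:Z - l1%:Z - 1) by nia.
  by rewrite ltNge H.
Qed.

Local Open Scope nat_scope.

Lemma sum_widen (bs : nat -> int) l n K K2 : (forall k, bs k = 1%R \/ bs k = (-1)%R) ->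
  l <= n -> n < 2 ^ K -> K <= K2 ->
  \sum_(k < K) eps k (bs k) l n = \sum_(k < K2) eps k (bs k) l n.
Proof.
move=> hb hl hn hK.
rewrite (big_ord_widen K2 (fun k => eps k (bs k) l n) hK) big_mkcond.
apply: eq_bigr => i _; case: ifP => // hi.
rewrite eps_large //; apply: leq_trans hn _; apply: leq_pexp2l => //.
by rewrite leqNgt hi.
Qed.

Lemma Dcomp_eq (bs : nat -> int) l n K : (forall k, bs k = 1%R \/ bs k = (-1)%R) ->
  l <= n -> n < 2 ^ K -> Dcomp bs l n = \sum_(k < K) eps k (bs k) l n.
Proof.
move=> hb hl hn; rewrite /Dcomp.
have hn' : n < 2 ^ n.+1.
  by apply: ltn_trans (ltn_expl _ (isT : 1 < 2)) _; rewrite ltn_exp2l.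
rewrite (@sum_widen bs l n n.+1 (maxn K n.+1) hb hl hn' (leq_maxr _ _)).
by rewrite (@sum_widen bs l n K (maxn K n.+1) hb hl hn (leq_maxl _ _)).
Qed.

Lemma comp (bs : nat -> int) l1 n1 l2 n2 r : (forall k, bs k = 1%R \/ bs k = (-1)%R) ->
  (forall k, eps k (bs (k + r)) l2 n2 = eps k (bs k) l2 n2) ->
  l1 <= n1 -> n1 < 2 ^ r -> l2 <= n2 -> ~~ odd l2 -> ~~ odd n2 ->
  Dcomp bs l1 n1 + Dcomp bs l2 n2 = Dcomp bs (l1 + 2 ^ r * l2) (n1 + 2 ^ r * n2).
Proof.
move=> hb hy h1 h2 h3 e2 e3.
set K' := (n1 + 2 ^ r * n2).+1.
have hP : 0 < 2 ^ r by rewrite expn_gt0.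
have hNK : n1 + 2 ^ r * n2 < 2 ^ K' by apply: ltn_trans (ltnSn _) (ltn_expl _ (isT : 1 < 2)).
have hA : l1 + 2 ^ r * l2 <= n1 + 2 ^ r * n2 by apply: leq_add => //; exact: leq_mul.
have hB : n1 + 2 ^ r * n2 < 2 ^ (r + K').
  apply: leq_trans hNK _; apply: leq_pexp2l => //; exact: leq_addl.
rewrite (@Dcomp_eq bs _ _ (r + K') hb hA hB).
rewrite big_split_ord /=.
rewrite (@Dcomp_eq bs _ _ r hb h1 h2).
have hC : n2 < 2 ^ K'.
  apply: leq_ltn_trans hNK; apply: leq_trans (leq_addl n1 _).
  by rewrite leq_pmull.
rewrite (@Dcomp_eq bs _ _ K' hb h3 hC).
congr (_ + _).
- apply: eq_bigr => i _ /=.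
  have hi := ltn_ord i.
  have := @eps_small i (r - i.+1) (bs i) l1 n1 l2 n2 e2 e3.
  by rewrite subnKC.
- apply: eq_bigr => i _ /=.
  by rewrite addnC eps_big // hy.
Qed.

Lemma hyp_comp (bs : nat -> int) (m s2 d2 r j : nat) :
  (forall k, bs k = 1%R \/ bs k = (-1)%R) -> j < m ->
  (forall i, Evec i 1%R s2 d2 m != Evec i (-1)%R s2 d2 m -> bs i = bs (i + r)) ->
  forall k, eps k (bs (k + r)) (s2 + j * d2) (s2 + j.+1 * d2)
          = eps k (bs k) (s2 + j * d2) (s2 + j.+1 * d2).
Proof.
move=> hb hj hy k.
case E: (Evec k 1%R s2 d2 m != Evec k (-1)%R s2 d2 m); first by rewrite -hy.
move/negbFE/eqP: E => E.
have := congr1 (fun s => nth 0 s j) E.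
rewrite /Evec /= !(nth_map 0) ?size_iota // nth_iota // add0n => e.
by case: (hb k) => ->; case: (hb (k + r)) => ->.
Qed.

Theorem lemma4p1 (bs : nat -> int) (m s1 s2 d1 d2 r : nat) :
  (forall k, bs k = 1%R \/ bs k = (-1)%R) ->
  1 <= m -> 1 <= d1 -> 1 <= d2 ->
  ~~ odd s2 -> ~~ odd d2 ->
  s1 + m * d1 < 2 ^ r ->
  (forall i, Evec i 1%R s2 d2 m != Evec i (-1)%R s2 d2 m -> bs i = bs (i + r)) ->
  vadd (Delta bs s1 d1 m) (Delta bs s2 d2 m)
  = Delta bs (s1 + 2 ^ r * s2) (d1 + 2 ^ r * d2) m.
Proof.
move=> hb hm hd1 hd2 hs2 hdd hr hy.
rewrite /vadd /Delta zip_map -map_comp.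
apply/eq_in_map => j; rewrite mem_iota add0n => /andP[_ hj] /=.
have -> : s1 + 2 ^ r * s2 + j * (d1 + 2 ^ r * d2) = (s1 + j * d1) + 2 ^ r * (s2 + j * d2).
  by move: (2 ^ r) => P; nia.
have -> : s1 + 2 ^ r * s2 + j.+1 * (d1 + 2 ^ r * d2) = (s1 + j.+1 * d1) + 2 ^ r * (s2 + j.+1 * d2).
  by move: (2 ^ r) => P; nia.
have hjm : j.+1 * d1 <= m * d1 by rewrite leq_mul2r hj orbT.
apply: comp => //.
- exact: (@hyp_comp bs m s2 d2 r j hb hj hy).
- by rewrite leq_add2l leq_mul2r leqnSn orbT.
- by apply: leq_ltn_trans hr; rewrite leq_add2l.
- by rewrite leq_add2l leq_mul2r leqnSn orbT.
- by rewrite oddD oddM (negbTE hs2) (negbTE hdd) andbF.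
- by rewrite oddD oddM (negbTE hs2) (negbTE hdd) andbF.
Qed.
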